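(* Let $\alpha\in(0,\frac12)$ and $d\ge2$ be such that $(d+1)\alpha\notin\mathbb{Z}$. Then there is no real linear subspace of $\mathbb{C}^{\mathcal A_d}$, other than $\{0\}$ and $\mathbb{C}^{\mathcal A_d}$, which is invariant under every $L_p$, $p\in\mathcal A_d$.
   Context: $\mathcal A_d=\{1-d,3-d,\dots,d-1\}$ (ordered as integers), $(e_q)_{q\in\mathcal A_d}$ the canonical basis of $\mathbb{C}^{\mathcal A_d}$, $\rho=e^{2\pi i\alpha}$, $\zeta=\rho^{-1}$. For $p\in\mathcal A_d$, $L_p$ is the $\mathbb{C}$-linear operator with $L_p(e_q)=e_q-e_p$ if $q>p$, $L_p(e_q)=e_q-\zeta e_p$ if $q<p$, and $L_p(e_p)=-\zeta e_p$. *)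

(* Defs.v *)
From HB Require Import structures.
From mathcomp Require Import all_boot all_order all_algebra.
From mathcomp Require Import all_classical all_reals.
From mathcomp Require Import trigo.
From mathcomp Require Import complex.
Set Implicit Arguments. Unset Strict Implicit. Unset Printing Implicit Defensive.
Import Order.TTheory GRing.Theory Num.Theory.
Local Open Scope ring_scope.
Local Open Scope complex_scope.

(* A_d = {1-d, 3-d, ..., d-1} is indexed by 'I_d via i |-> 2i+1-d;
   this bijection is increasing, so the integer order on A_d is the order of 'I_d. *)

Definition rho (R : realType) (alpha : R) : R[i] :=
  (cos (2 * pi * alpha)) +i* (sin (2 * pi * alpha)).
Definition zeta (R : realType) (alpha : R) : R[i] := (rho alpha)^-1.

Definition basisv {R : realType} {d : nat} (q : 'I_d) : 'cV[R[i]]_d := delta_mx q 0.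

Definition Lbasis (R : realType) (alpha : R) (d : nat) (p q : 'I_d) : 'cV[R[i]]_d :=
  if (p < q)%N then basisv q - basisv p
  else if (q < p)%N then basisv q - zeta alpha *: basisv p
  else - (zeta alpha *: basisv p).

Definition Lop (R : realType) (alpha : R) (d : nat) (p : 'I_d) (v : 'cV[R[i]]_d)
  : 'cV[R[i]]_d := \sum_(q < d) v q 0 *: Lbasis alpha p q.

Definition real_subspace (R : realType) (d : nat) (V : 'cV[R[i]]_d -> Prop) : Prop :=
  [/\ V 0,
      (forall u v, V u -> V v -> V (u + v)) &
      (forall (r : R) v, V v -> V ((r%:C) *: v))].

(* Main.v *)
Require Import Defs.
From HB Require Import structures.
From mathcomp Require Import all_boot all_order all_algebra.
From mathcomp Require Import all_classical all_reals.
From mathcomp Require Import trigo.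
From mathcomp Require Import complex.
From mathcomp Require Import ring lra zify.
Import Order.TTheory GRing.Theory Num.Theory.
Local Open Scope ring_scope.
Set Implicit Arguments. Unset Strict Implicit. Unset Printing Implicit Defensive.
Section Trig.
Local Open Scope complex_scope.
Variable R : realType.

Lemma cos_int (x : R) (n : int) : cos (x - pi *+ 2 * n%:~R) = cos x.
Proof.
case: n => m.
- have := periodicn (@cosD2pi R) m (x - pi *+ 2 * m%:~R).
  by rewrite mulr_natr subrK => <-.
- rewrite NegzE mulrN opprK.
  have := periodicn (@cosD2pi R) m.+1 x.
  by rewrite mulr_natr.
Qed.

Lemma cos_eq1 (t : R) : cos (pi *+ 2 * t) = 1 -> exists z : int, t = z%:~R.
Proof.
move=> h; exists (Num.floor t).
set n := Num.floor t.
have hn := floor_itv t; rewrite -/n in hn.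
set s := t - n%:~R.
have s0 : 0 <= s by rewrite subr_ge0; case/andP: hn.
have s1 : s < 1 by move: hn; rewrite intrD /s => /andP[_ h2]; lra.
have hs : cos (pi *+ 2 * s) = 1.
  by rewrite mulrBr cos_int.
have [s00|spos] := eqVneq s 0; first by move: s00; rewrite /s => /eqP; rewrite subr_eq0 => /eqP.
have sgt : 0 < s by rewrite lt_def spos s0.
exfalso.
have pg := pi_gt0 R.
set u := pi *+ 2 * s in hs.
have u0 : 0 < u by rewrite /u mulr_gt0 // mulrn_wgt0.
have u2 : u < pi *+ 2 by rewrite /u -mulr_natr; nra.
have c0 : cos (0 : R) = 1 := cos0 R.
have [upi|upi] := leP u pi.
- have := @ltr_cos R 0 u.
  rewrite !in_itv /= lexx pi_ge0 (ltW u0) upi => /(_ isT isT).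
  by rewrite u0 hs c0 ltxx.
- have := @ltr_cos R 0 (pi *+ 2 - u).
  have e : cos (pi *+ 2 - u) = 1 by rewrite addrC cosD2pi cosN.
  rewrite !in_itv /= lexx pi_ge0 e c0 ltxx => H.
  have : false = (0 < pi *+ 2 - u).
    apply: H => //; apply/andP; split; rewrite mulr2n in u2 *; lra.
  rewrite subr_gt0 u2 //.
Qed.
End Trig.
Section Cx.
Local Open Scope complex_scope.
Variable R : realType.
Variable alpha : R.
Let th := 2 * pi * alpha.

Lemma rhoX n : rho alpha ^+ n = cos (th *+ n) +i* sin (th *+ n).
Proof.
elim: n => [|n IH]; first by rewrite expr0 !mulr0n cos0 sin0.
rewrite exprSr IH /rho -/th mulrSr cosD sinD.
by apply/eqP; rewrite eq_complex /=; apply/andP; split; apply/eqP; ring.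
Qed.

Lemma rho_conj : rho alpha * (cos th -i* sin th) = 1.
Proof.
rewrite /rho -/th; apply/eqP; rewrite eq_complex /=; apply/andP; split; apply/eqP.
  by have := cos2Dsin2 th; rewrite !expr2 => <-; ring.
ring.
Qed.

Lemma zetaE : zeta alpha = cos th -i* sin th.
Proof.
have h := rho_conj.
have nz : rho alpha != 0.
  by apply/negP => /eqP e; move: h; rewrite e mul0r => /eqP; rewrite eq_sym oner_eq0.
by rewrite /zeta -[RHS](mulKf nz) h mulr1.
Qed.

Lemma rho_zeta : rho alpha * zeta alpha = 1.
Proof. by rewrite zetaE rho_conj. Qed.

Lemma Im_zeta : 0 < alpha -> alpha < 1 / 2 -> complex.Im (zeta alpha) != 0.
Proof.
move=> a0 a1; rewrite zetaE /= oppr_eq0; apply/lt0r_neq0/sin_gt0_pi.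
have pg := pi_gt0 R.
rewrite /th; apply/andP; split; nra.
Qed.
End Cx.
Section Lin.
Local Open Scope complex_scope.
Variable R : realType.
Variable alpha : R.
Variable d : nat.
Local Notation z := (zeta alpha).
Implicit Types (p q : 'I_d) (v : 'cV[R[i]]_d).

Definition coef p q : R[i] :=
  (if (q <= p)%N then z else 0) + (if (p <= q)%N then 1 else 0).

Definition fdot p v : R[i] := \sum_q coef p q * v q 0.

Lemma Lbasis_eq p q : Lbasis alpha p q = basisv q - coef p q *: basisv p.
Proof.
rewrite /Lbasis /coef; case: ltngtP => h.
- by rewrite add0r scale1r.
- by rewrite addr0.
- have e : q = p by apply: val_inj.
  by rewrite e scalerDl scale1r opprD addrCA subrr addr0.
Qed.

Lemma sum_basis v : \sum_q v q 0 *: basisv q = v.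
Proof.
rewrite [RHS]matrix_sum_delta; apply: eq_bigr => q _.
by rewrite big_ord1.
Qed.

Lemma Lop_eq p v : Lop alpha p v = v - fdot p v *: basisv p.
Proof.
rewrite /Lop.
under eq_bigr do rewrite Lbasis_eq scalerBr scalerA.
rewrite sumrB sum_basis /fdot scaler_suml; congr (_ - _).
by apply: eq_bigr => q _; rewrite mulrC.
Qed.

Lemma fdot_basis p r c : fdot p (c *: basisv r) = coef p r * c.
Proof.
rewrite /fdot (bigD1 r) //= big1 => [|q /negbTE nq].
  by rewrite !mxE eqxx /= mulr1 addr0.
by rewrite !mxE nq /= mulr0 mulr0.
Qed.

Lemma sum_if (j : 'I_d) (a : R[i]) (f : 'I_d -> R[i]) :
  \sum_q (if q == j then a else 0) * f q = a * f j.
Proof.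
rewrite (bigD1 j) //= eqxx big1 ?addr0 // => q /negbTE ->; by rewrite mul0r.
Qed.

Lemma coef_diff (i j q : 'I_d) : nat_of_ord j = (nat_of_ord i).+1 ->
  coef j q - coef i q = (if q == j then z else 0) - (if q == i then 1 else 0).
Proof.
move=> hj; have e1 : forall a b : 'I_d, (a == b) = (nat_of_ord a == nat_of_ord b) by [].
rewrite /coef !e1 hj.
by repeat case: ifPn => ? ; try (exfalso; lia); ring.
Qed.

Lemma fdot_diff (i j : 'I_d) v : nat_of_ord j = (nat_of_ord i).+1 ->
  fdot j v - fdot i v = z * v j 0 - v i 0.
Proof.
move=> hj; rewrite /fdot -sumrB.
under eq_bigr do rewrite -mulrBl coef_diff // mulrBl.
by rewrite sumrB !sum_if mul1r.
Qed.

End Lin.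

Section Ker.
Variable R : realType.
Variable alpha : R.
Variable n : nat.
Local Notation z := (zeta alpha).
Local Notation r := (rho alpha).
Hypothesis rz : r * z = 1.

Lemma ker0 (v : 'cV[R[i]]_n.+2) :
  (forall p, fdot alpha p v = 0) -> r ^+ n.+3 != 1 -> v = 0.
Proof.
move=> hf hr.
have e1 : forall a b : 'I_n.+2, (a == b) = (nat_of_ord a == nat_of_ord b) by [].
have hrec : forall k (hk : (k < n.+2)%N), v (Ordinal hk) 0 = r ^+ k * v ord0 0.
  elim=> [|k IH] hk.
    by rewrite expr0 mul1r; congr (v _ _); apply: val_inj.
  have hk' : (k < n.+2)%N by apply: ltnW.
  have := fdot_diff alpha v (i := Ordinal hk') (j := Ordinal hk) erefl.
  rewrite !hf subrr IH => /eqP; rewrite eq_sym subr_eq0 => /eqP h.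
  by rewrite exprS -mulrA -h mulrA [r * z]rz mul1r.
set T := \sum_q v q 0.
have f0 : fdot alpha ord0 v = z * v ord0 0 + T.
  rewrite /fdot /coef.
  under eq_bigr do rewrite leqn0 -[(_ == 0)%N]/(_ == ord0) leq0n mulrDl.
  by rewrite big_split /= sum_if; under eq_bigr do rewrite mul1r.
have fm : fdot alpha ord_max v = z * T + v ord_max 0.
  rewrite /fdot /coef.
  have em : forall q : 'I_n.+2, (n.+1 <= q)%N = (q == ord_max).
    by move=> q; rewrite e1 /= eqn_leq leq_ord.
  under eq_bigr do rewrite leq_ord em mulrDl.
  by rewrite big_split /= sum_if mul1r mulr_sumr.
have hm : v ord_max 0 = r ^+ n.+1 * v ord0 0.
  by have := hrec n.+1 (ltnSn _); rewrite (_ : Ordinal _ = ord_max) //; apply: val_inj.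
have hT : T = - (z * v ord0 0).
  by apply/eqP; rewrite -addr_eq0 addrC -f0 hf.
have hvm : v ord_max 0 = - (z * T).
  by apply/eqP; rewrite -addr_eq0 addrC -fm hf.
have v00 : v ord0 0 = 0.
  have : v ord0 0 * (r ^+ n.+3 - 1) = 0.
    have -> : r ^+ n.+3 = r ^+ 2 * r ^+ n.+1 by rewrite -exprD.
    have e2 : r ^+ 2 * r ^+ n.+1 * v ord0 0 = v ord0 0.
      rewrite -mulrA -hm hvm hT.
      have -> : r ^+ 2 * - (z * - (z * v ord0 0)) = (r * z) * (r * z) * v ord0 0 by ring.
      by rewrite rz !mul1r.
    by rewrite mulrBr mulr1 mulrC e2 subrr.
  by move/eqP; rewrite mulf_eq0 subr_eq0 (negbTE hr) orbF => /eqP.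
apply/matrixP => i j; rewrite ord1 mxE.
have := hrec i (ltn_ord i); rewrite (_ : Ordinal _ = i); last by apply: val_inj.
by rewrite v00 mulr0.
Qed.
End Ker.
Section S.
Local Open Scope complex_scope.
Variable R : realType.
Lemma real_span (zz c w : R[i]) : complex.Im zz != 0 -> c != 0 ->
  exists a b : R, w = a%:C * c + b%:C * (zz * c).
Proof.
move=> hz hc.
have [a [b hy]] : exists a b : R, w / c = a%:C + b%:C * zz.
  move: hz; case: zz => zx zy /= hz; case: (w / c) => yx yy.
  exists (yx - (yy / zy) * zx), (yy / zy).
  apply/eqP; rewrite eq_complex /=; apply/andP; split; apply/eqP.
    ring.
  by field.
exists a, b; rewrite mulrA -mulrDl -hy mulfVK //.
Qed.
End S.

Section Sub.
Local Open Scope complex_scope.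
Variable R : realType.
Variable alpha : R.
Variable d : nat.
Local Notation z := (zeta alpha).
Variable V : 'cV[R[i]]_d -> Prop.
Hypothesis V0 : V 0.
Hypothesis VD : forall u v, V u -> V v -> V (u + v).
Hypothesis VZ : forall (r : R) v, V v -> V ((r%:C) *: v).
Hypothesis VL : forall (p : 'I_d) v, V v -> V (Lop alpha p v).
Hypothesis hIm : complex.Im z != 0.

Lemma Vopp v : V v -> V (- v).
Proof. by move=> /(VZ (-1)); rewrite rmorphN1 scaleN1r. Qed.

Lemma VA p w : V w -> V (fdot alpha p w *: basisv p).
Proof.
move=> Vw; have := VD Vw (Vopp (VL p Vw)).
by rewrite Lop_eq opprB addrCA subrr addr0.
Qed.

Lemma VB p c : V (c *: basisv p) -> V ((z * c) *: basisv p).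
Proof.
move=> Vc; have := VD (VA p Vc) (Vopp Vc).
rewrite fdot_basis /coef leqnn -scalerBl; congr (V (_ *: _)); ring.
Qed.

Lemma VC p c : c != 0 -> V (c *: basisv p) -> forall w, V (w *: basisv p).
Proof.
move=> hc Vc w; have Vzc := VB Vc.
have [a [b ->]] := real_span w hIm hc.
rewrite scalerDl -[(a%:C * c) *: _]scalerA -[(b%:C * _) *: _]scalerA.
by apply: VD; apply: VZ.
Qed.

Lemma z_neq0 : z != 0.
Proof. by apply: contraNneq hIm => ->. Qed.

Lemma z1_neq0 : z + 1 != 0.
Proof.
apply: contraNneq hIm => h.
have : complex.Im (z + 1) = complex.Im z by case: (z) => x y /=; rewrite addr0.
by rewrite h => <-.
Qed.

Lemma coef_neq0 (p q : 'I_d) : coef alpha p q != 0.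
Proof.
rewrite /coef; case: ltngtP => _; rewrite ?add0r ?addr0 ?oner_eq0 ?z_neq0 //.
exact: z1_neq0.
Qed.

Lemma VE p : (forall w, V (w *: basisv p)) -> forall v, V v.
Proof.
move=> Hp.
have Hq : forall q w, V (w *: basisv q).
  move=> q w; have := VA q (Hp (w / coef alpha q p)).
  by rewrite fdot_basis mulrC divfK // coef_neq0.
move=> v; rewrite -(sum_basis v).
by apply: big_ind => // q _; apply: Hq.
Qed.
End Sub.

Theorem mainTheorem18 (R : realType) (alpha : R) (d : nat) :
  0 < alpha -> alpha < 1 / 2 -> (2 <= d)%N ->
  (forall z : int, (d.+1)%:R * alpha != z%:~R) ->
  forall V : 'cV[R[i]]_d -> Prop,
    real_subspace V ->
    (forall (p : 'I_d) v, V v -> V (Lop alpha p v)) ->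
    (forall v, V v <-> v = 0) \/ (forall v, V v).
Proof.
move=> a0 a1; case: d => [|[|n]] // _ hint V [V0 VD VZ] VL.
have hIm := Im_zeta a0 a1.
have rz := rho_zeta alpha.
have hr : rho alpha ^+ n.+3 != 1.
  apply/negP => /eqP h.
  have hc : cos ((2 * pi * alpha) *+ n.+3) = 1.
    by move: h; rewrite rhoX => /(congr1 (@complex.Re R)).
  have [z0 hz0] : exists z0 : int, n.+3%:R * alpha = z0%:~R.
    apply: cos_eq1.
    suff -> : pi *+ 2 * (n.+3%:R * alpha) = 2 * pi * alpha *+ n.+3 by [].
    by rewrite -[RHS]mulr_natr -[pi *+ 2]mulr_natr; ring.
  by move: (hint z0); rewrite hz0 eqxx.
have [[v [Vv vn0]] | H] := pselect (exists v, V v /\ v != 0); last first.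
  left => v; split; last by move->.
  move=> Vv; apply/eqP; apply/negPn/negP => hn; apply: H; by exists v.
right.
have [[p fp] | H2] := pselect (exists p, fdot alpha p v != 0); last first.
  exfalso; move/eqP: vn0; apply; apply: (ker0 rz) hr => p.
  apply/eqP; apply/negPn/negP => h; apply: H2; by exists p.
apply: (VE V0 VD VZ VL hIm (p := p)).
apply: (VC VD VZ VL hIm fp).
exact: (VA VD VZ VL).
Qed.
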